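(* Let $p$ be a prime, let $\chi$ be a Dirichlet character, and let $y$ be a positive integer. If $\prod_{n=1}^y|1+\chi(n)|>2^y/p^2$, then the number of integers $n\in\{1,\dots,y\}$ such that $|\chi(n)-1|>1/\log p$ is less than $16(\log p)^3$. *)

(* Defs.v *)
From Stdlib Require Import Reals List Arith ZArith Znumtheory.
From Coquelicot Require Import Coquelicot.
Open Scope R_scope.

Definition dirichlet_character (q : nat) (chi : nat -> C) : Prop :=
  (0 < q)%nat /\
  chi 1%nat = RtoC 1 /\
  (forall m n : nat, chi (m * n)%nat = Cmult (chi m) (chi n)) /\
  (forall n : nat, chi (n + q)%nat = chi n) /\
  (forall n : nat, Nat.gcd n q <> 1%nat -> chi n = RtoC 0) /\
  (forall n : nat, Nat.gcd n q = 1%nat -> chi n <> RtoC 0).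

Definition is_dirichlet_character (chi : nat -> C) : Prop :=
  exists q : nat, dirichlet_character q chi.

Definition prod_abs_one_plus (chi : nat -> C) (y : nat) : R :=
  fold_right Rmult 1 (map (fun n => Cmod (Cplus (RtoC 1) (chi n))) (seq 1 y)).

Definition count_far (chi : nat -> C) (y p : nat) : nat :=
  length (filter (fun n => if Rlt_dec (1 / ln (INR p)) (Cmod (Cminus (chi n) (RtoC 1)))
                           then true else false) (seq 1 y)).

(* Main.v *)
Require Import Defs.
From Stdlib Require Import Reals List Arith ZArith Znumtheory.
From Coquelicot Require Import Coquelicot.
From Stdlib Require Import Lia Lra.
Open Scope R_scope.

Lemma exp_pow_k (x : R) (k : nat) : exp x ^ k = exp (INR k * x).
Proof.
  induction k as [|k IH]; simpl.
  - rewrite Rmult_0_l, exp_0; reflexivity.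
  - rewrite IH, <- exp_plus. f_equal. destruct k; simpl; lra.
Qed.

Lemma bernoulli (a : R) (k : nat) : 0 <= a -> 1 + INR k * a <= (1 + a) ^ k.
Proof.
  intros Ha; induction k as [|k IH].
  - simpl; lra.
  - rewrite S_INR. change ((1 + a) ^ S k) with ((1 + a) * (1 + a) ^ k).
    assert (0 <= INR k) by apply pos_INR.
    assert (0 <= INR k * a * a) by (apply Rmult_le_pos; [apply Rmult_le_pos|]; lra).
    nra.
Qed.

Lemma sum_in (f : nat -> R) (l : list nat) (x : nat) :
  (forall n, 0 <= f n) -> In x l -> f x <= fold_right Rplus 0 (map f l).
Proof.
  intros Hf; induction l as [|a l IH]; simpl; [tauto|].
  intros [->|H].
  - assert (0 <= fold_right Rplus 0 (map f l)).
    { clear IH. induction l as [|b l IHl]; simpl; [lra|]. specialize (Hf b). lra. }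
    lra.
  - specialize (IH H). specialize (Hf a). lra.
Qed.

Lemma chi_bound (q : nat) (chi : nat -> C) :
  dirichlet_character q chi -> forall n, Cmod (chi n) <= 1.
Proof.
  intros [Hq [H1 [Hm [Hp _]]]] n.
  assert (Hper : forall k r, chi (r + k * q)%nat = chi r).
  { induction k as [|k IH]; intros r.
    - f_equal; lia.
    - replace (r + S k * q)%nat with ((r + k * q) + q)%nat by lia.
      rewrite Hp; apply IH. }
  set (M := fold_right Rplus 0 (map (fun r => Cmod (chi r)) (seq 0 q))).
  assert (HM : forall m, Cmod (chi m) <= M).
  { intros m.
    rewrite (Nat.div_mod m q) by lia.
    rewrite Nat.mul_comm, Nat.add_comm, Hper.
    apply (sum_in (fun r => Cmod (chi r))). intros; apply Cmod_ge_0.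
    apply in_seq. split; [lia|]. simpl. apply Nat.mod_upper_bound; lia. }
  assert (Hpow : forall k, Cmod (chi (n ^ k)%nat) = Cmod (chi n) ^ k).
  { induction k as [|k IH]; simpl.
    - rewrite H1. apply Cmod_1.
    - rewrite Hm, Cmod_mult, IH. reflexivity. }
  destruct (Rle_dec (Cmod (chi n)) 1) as [Hle|Hgt]; [exact Hle|].
  exfalso.
  set (a := Cmod (chi n) - 1).
  assert (Ha : 0 < a) by (unfold a; lra).
  destruct (INR_unbounded (M / a)) as [k Hk].
  assert (HB := bernoulli a k (Rlt_le _ _ Ha)).
  replace (1 + a) with (Cmod (chi n)) in HB by (unfold a; lra).
  rewrite <- Hpow in HB.
  specialize (HM (n ^ k)%nat).
  assert (INR k * a > M).
  { apply Rmult_gt_compat_r with (r := a) in Hk; [|lra].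
    unfold Rdiv in Hk. rewrite Rmult_assoc, Rinv_l, Rmult_1_r in Hk; lra. }
  lra.
Qed.

Lemma Cmod_sq (z : C) : Cmod z ^ 2 = fst z ^ 2 + snd z ^ 2.
Proof.
  unfold Cmod. rewrite pow2_sqrt; [reflexivity|].
  apply Rplus_le_le_0_compat; apply pow2_ge_0.
Qed.

Lemma key_ineq (z : C) : Cmod z <= 1 ->
  Cmod (Cplus (RtoC 1) z) ^ 2 <= 4 - Cmod (Cminus z (RtoC 1)) ^ 2.
Proof.
  intros Hz.
  assert (Hz2 : Cmod z ^ 2 <= 1).
  { assert (0 <= Cmod z) by apply Cmod_ge_0. nra. }
  rewrite Cmod_sq in Hz2. rewrite !Cmod_sq.
  destruct z as [a b]; simpl in *. nra.
Qed.

Section Main.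
Variable chi : nat -> C.
Variable d : R.
Hypothesis Hchi : forall n, Cmod (chi n) <= 1.
Hypothesis Hd : 0 <= d.

Definition farb (n : nat) : bool :=
  if Rlt_dec d (Cmod (Cminus (chi n) (RtoC 1))) then true else false.

Lemma prod_bound (l : list nat) :
  (fold_right Rmult 1 (map (fun n => Cmod (Cplus (RtoC 1) (chi n))) l)) ^ 2
  <= 4 ^ length l * (1 - d ^ 2 / 4) ^ length (filter farb l)
  /\ 0 <= fold_right Rmult 1 (map (fun n => Cmod (Cplus (RtoC 1) (chi n))) l).
Proof.
  induction l as [|n l [IH IH0]].
  - simpl; lra.
  - cbn [map fold_right length]. set (P := fold_right Rmult 1 _) in *.
    assert (Hg := key_ineq (chi n) (Hchi n)).
    set (g := Cmod (Cplus (RtoC 1) (chi n))) in *.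
    assert (g0 : 0 <= g) by apply Cmod_ge_0.
    assert (P2 : 0 <= P ^ 2) by apply pow2_ge_0.
    split; [|apply Rmult_le_pos; assumption].
    rewrite Rpow_mult_distr.
    assert (Efl : filter farb (n :: l) = if farb n then n :: filter farb l else filter farb l) by reflexivity.
    rewrite Efl. change (4 ^ S (length l)) with (4 * 4 ^ length l).
    destruct (farb n) eqn:Ef; unfold farb in Ef;
      destruct (Rlt_dec d (Cmod (Cminus (chi n) (RtoC 1)))) as [Hf|Hf]; try discriminate.
    + change (length (n :: filter farb l)) with (S (length (filter farb l))).
      change ((1 - d ^ 2 / 4) ^ S (length (filter farb l))) with
        ((1 - d ^ 2 / 4) * (1 - d ^ 2 / 4) ^ (length (filter farb l))).
      assert (g ^ 2 <= 4 * (1 - d ^ 2 / 4)) by nra.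
      replace (4 * 4 ^ length l * ((1 - d ^ 2 / 4) * (1 - d ^ 2 / 4) ^ length (filter farb l)))
        with ((4 * (1 - d ^ 2 / 4)) * (4 ^ length l * (1 - d ^ 2 / 4) ^ length (filter farb l))) by ring.
      apply Rmult_le_compat; try assumption. apply pow2_ge_0.
    + assert (g ^ 2 <= 4) by (assert (0 <= Cmod (Cminus (chi n) (RtoC 1)) ^ 2) by apply pow2_ge_0; lra).
      rewrite Rmult_assoc.
      apply Rmult_le_compat; try assumption. apply pow2_ge_0.
Qed.
End Main.

Theorem lemma4p3 (p : nat) (chi : nat -> C) (y : nat) :
  prime (Z.of_nat p) ->
  is_dirichlet_character chi ->
  (0 < y)%nat ->
  prod_abs_one_plus chi y > 2 ^ y / (INR p) ^ 2 ->
  INR (count_far chi y p) < 16 * (ln (INR p)) ^ 3.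
Proof.
  intros Hp [q Hq] Hy Hprod.
  assert (Hchi := chi_bound q chi Hq).
  apply prime_ge_2 in Hp.
  assert (HP : 2 <= INR p).
  { replace 2 with (INR 2) by (simpl; lra). apply le_INR. lia. }
  assert (Hl2 := ln_lt_2).
  assert (HL : ln 2 <= ln (INR p)).
  { apply ln_le; lra. }
  set (L := ln (INR p)) in *.
  assert (L0 : 0 < L) by lra.
  set (d := 1 / L).
  assert (Hd : 0 <= d) by (unfold d; apply Rlt_le, Rdiv_lt_0_compat; lra).
  destruct (prod_bound chi d Hchi Hd (seq 1 y)) as [Hb _].
  rewrite length_seq in Hb.
  set (k := length (filter (farb chi d) (seq 1 y))) in *.
  unfold prod_abs_one_plus in Hprod.
  set (P := fold_right Rmult 1 _) in *.
  assert (Hp2 : 0 < INR p ^ 2) by (apply pow_lt; lra).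
  assert (H4 : 0 < 2 ^ y) by (apply pow_lt; lra).
  assert (Hpos : 0 < 2 ^ y / INR p ^ 2) by (apply Rdiv_lt_0_compat; lra).
  assert (HPsq : (2 ^ y / INR p ^ 2) ^ 2 < P ^ 2).
  { nra. }
  assert (Hr : (1 - d ^ 2 / 4) ^ k <= exp (INR k * (- (d ^ 2 / 4)))).
  { rewrite <- exp_pow_k. apply pow_incr. split.
    - unfold d. assert (1/L < 2).
      { apply (Rmult_lt_reg_r L); [lra|]. field_simplify; lra. }
      assert (0 <= 1 / L) by (apply Rlt_le, Rdiv_lt_0_compat; lra).
      nra.
    - assert (H := exp_ineq1_le (- (d ^ 2 / 4))). lra. }
  assert (Hexp : exp (- (4 * L)) = / INR p ^ 4).
  { replace (- (4 * L)) with (INR 4 * (- L)) by (simpl; ring).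
    rewrite <- exp_pow_k, exp_Ropp. unfold L. rewrite exp_ln by lra.
    rewrite pow_inv. reflexivity. }
  assert (Hlt : / INR p ^ 4 < exp (INR k * - (d ^ 2 / 4))).
  { assert (E : (2 ^ y / INR p ^ 2) ^ 2 = 4 ^ y * / INR p ^ 4).
    { unfold Rdiv. rewrite Rpow_mult_distr, pow_inv, <- !pow_mult.
      rewrite Nat.mul_comm, pow_mult. replace (2 ^ 2) with 4 by ring. reflexivity. }
    rewrite E in HPsq.
    assert (H44 : 0 < 4 ^ y) by (apply pow_lt; lra).
    assert (4 ^ y * / INR p ^ 4 < 4 ^ y * exp (INR k * - (d ^ 2 / 4))).
    { apply Rlt_le_trans with (P ^ 2); [lra|].
      apply Rle_trans with (1 := Hb). apply Rmult_le_compat_l; lra. }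
    apply Rmult_lt_reg_l in H; lra. }
  rewrite <- Hexp in Hlt.
  apply exp_lt_inv in Hlt.
  assert (Hk : INR k * d ^ 2 < 16 * L) by lra.
  unfold d in Hk.
  change (INR (count_far chi y p)) with (INR k).
  replace (INR k) with (INR k * (1 / L) ^ 2 * L ^ 2) by (field; lra).
  replace (16 * L ^ 3) with (16 * L * L ^ 2) by ring.
  apply Rmult_lt_compat_r; [apply pow_lt; lra | exact Hk].
Qed.
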